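(* Let $\{Q(C;\alpha)\}$ be a filtration of simplicial complexes on a finite set $C$ and fix $\alpha\ge0$. Let $G\subseteq Q(C;\alpha)$ be a graph that spans $Q(C;\alpha)$ such that the inclusion induces an isomorphism $H_1(G;\mathbb{Z}_2)\to H_1(Q(C;\alpha);\mathbb{Z}_2)$. Let $(b_i,d_i)$, $i=1,\dots,m$, be all dots (counted with multiplicity) of the persistence diagram $\mathrm{PD}\{Q(C;\alpha)\}$ with $b_i\le\alpha<d_i$. Then the total length of edges of $G$ is at least the total length of edges of $\mathrm{MST}(C;\alpha)$ plus $2\sum_{i=1}^m b_i$.
   Context: A filtration on a finite set $C$: nested finite simplicial complexes $Q(C;\alpha)$, $\alpha\ge0$, with vertex set $C$, each simplex entering at a minimal scale; final complex connected. Edge length $|e|=2\min\{\alpha:e\subset Q(C;\alpha)\}$. $\mathrm{MST}(C)$ is a minimum total length spanning tree on $C$ using filtration edges; $\mathrm{MST}(C;\alpha)$ removes all open edges of length $>2\alpha$. A graph $G$ spans a complex $Q$ on $C$ if $G$ has vertex set $C$, every edge of $G$ is in $Q$, and the inclusion induces a bijection on connected components. $\mathrm{PD}\{Q(C;\alpha)\}$ is the 1-dimensional persistence diagram (with $\mathbb{Z}_2$ coefficients) of the filtration: the multiset of (birth, death) pairs of $H_1$ classes, where a class is born at $\alpha_i$ if not in the image from any earlier scale and dies at $\alpha_j$ when its image merges into the image from scales earlier than its birth. *)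

(* Defs.v *)
From HB Require Import structures.
From mathcomp Require Import all_boot all_order all_algebra.
Set Implicit Arguments. Unset Strict Implicit. Unset Printing Implicit Defensive.
Import Order.TTheory GRing.Theory Num.Theory.

(* Chains with Z_2 coefficients are functions {set C} -> F_2
   (only the values on simplices of the relevant complex matter). *)
Section Chains.
Variable C : finType.

Notation chain := {ffun {set C} -> ('F_2)^o}.
Local Open Scope ring_scope.

Definition delta (s : {set C}) : chain := [ffun t => if t == s then 1 else 0].

Definition bd_simplex (s : {set C}) : chain :=
  if (1 < #|s|)%N then \sum_(v in s) delta (s :\ v) else 0.

Definition bd : 'End(chain) :=
  linfun (fun c : chain => \sum_(s : {set C}) c s *: bd_simplex s).

Definition chains (X : {set {set C}}) (k : nat) : {vspace chain} :=
  <<[seq delta s | s <- filter (fun s : {set C} => #|s| == k.+1) (enum X)]>>%VS.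

(* 1-cycles and 1-boundaries of X ; H_1(X;Z_2) = Z1 X / B1 X *)
Definition Z1 (X : {set {set C}}) : {vspace chain} := (chains X 1 :&: lker bd)%VS.
Definition B1 (X : {set {set C}}) : {vspace chain} := (bd @: chains X 2)%VS.

(* rank of the map H_1(X) -> H_1(Y) induced by an inclusion X \subset Y:
   dim of the image (Z1 X + B1 Y)/B1 Y *)
Definition rk (X Y : {set {set C}}) : nat := (\dim (Z1 X + B1 Y) - \dim (B1 Y))%N.

(* the map H_1(X) -> H_1(Y), [z] |-> [z], induced by X \subset Y is
   injective and surjective *)
Definition H1_incl_iso (X Y : {set {set C}}) : bool :=
  (Z1 X :&: B1 Y <= B1 X)%VS && (Z1 Y <= Z1 X + B1 Y)%VS.

Definition adj (X : {set {set C}}) : rel C := fun x y => [set x; y] \in X.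
Definition is_edge (e : {set C}) := #|e| == 2.
Definition edges (X : {set {set C}}) : {set {set C}} := [set e in X | is_edge e].
Definition connected (X : {set {set C}}) := [forall x, forall y, connect (adj X) x y].

Definition graph_cpx (E : {set {set C}}) : {set {set C}} :=
  [set [set x] | x : C] :|: E.

(* G = (C, E) spans the complex X: edges of G are edges of X, and the map
   on connected components induced by inclusion is a bijection (it is
   automatically well defined and surjective since the vertex sets agree;
   injectivity = vertices connected in X are connected in G). *)
Definition spans (E X : {set {set C}}) : bool :=
  (E \subset edges X) &&
  [forall x, forall y, connect (adj X) x y ==> connect (adj E) x y].

Definition is_spanning_tree (T : {set {set C}}) : bool :=
  [forall e in T, is_edge e] && connected T &&
  [forall e in T, ~~ connected (T :\ e)].
End Chains.

Section Filtration.
Variables (R : realFieldType) (C : finType).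
Local Open Scope ring_scope.

(* A filtration is given by its final complex K (a set of nonempty simplices)
   and the entry scale ent s >= 0 of every simplex s \in K, so that
   Q(C;alpha) = [set s in K | ent s <= alpha]. *)
Definition is_filtration (K : {set {set C}}) (ent : {set C} -> R) : Prop :=
  [/\ set0 \notin K,
      (forall x : C, [set x] \in K /\ ent [set x] = 0),
      (forall s, s \in K -> 0 <= ent s),
      (forall s t : {set C}, s \in K -> t \subset s -> t != set0 -> t \in K /\ ent t <= ent s)
    & connected K].

Definition Qle (K : {set {set C}}) (ent : {set C} -> R) (a : R) :=
  [set s in K | ent s <= a].
Definition Qlt (K : {set {set C}}) (ent : {set C} -> R) (a : R) :=
  [set s in K | ent s < a].

Definition elen (ent : {set C} -> R) (e : {set C}) : R := 2%:R * ent e.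
Definition total_len (ent : {set C} -> R) (E : {set {set C}}) : R :=
  \sum_(e in E) elen ent e.

Definition is_MST (K : {set {set C}}) (ent : {set C} -> R) (T : {set {set C}}) : Prop :=
  T \subset edges K /\ is_spanning_tree T /\
  forall T' : {set {set C}}, T' \subset edges K -> is_spanning_tree T' ->
             total_len ent T <= total_len ent T'.

Definition MST_at (ent : {set C} -> R) (T : {set {set C}}) (a : R) : {set {set C}} :=
  [set e in T | elen ent e <= 2%:R * a].

(* the scales at which simplices enter (all possible births / finite deaths) *)
Definition crit (K : {set {set C}}) (ent : {set C} -> R) : seq R := undup [seq ent s | s <- enum K].

(* Multiplicity in the 1-dim persistence diagram of the dot (b, d),
   d = Some d' finite or None = infinity, via the rank function:
   #(classes born at b alive in Y) = rk Q_b Y - rk Q_{<b} Y,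
   mult (b,d) = #(born at b, alive in Q_{<d}) - #(born at b, alive in Q_d).
   All nat subtractions here are of a smaller rank from a larger one. *)
Definition pd_mult (K : {set {set C}}) (ent : {set C} -> R) (b : R) (d : option R) : nat :=
  match d with
  | Some d' => (rk (Qle K ent b) (Qlt K ent d') - rk (Qlt K ent b) (Qlt K ent d'))
             - (rk (Qle K ent b) (Qle K ent d') - rk (Qlt K ent b) (Qle K ent d'))
  | None => rk (Qle K ent b) K - rk (Qlt K ent b) K
  end.

Definition pd_birth_sum (K : {set {set C}}) (ent : {set C} -> R) (a : R) : R :=
  \sum_(b <- crit K ent | b <= a)
     ( (\sum_(d <- crit K ent | a < d) (pd_mult K ent b (Some d))%:R * b)
       + (pd_mult K ent b None)%:R * b ).
End Filtration.

(* Main.v *)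
Require Import Defs.
From HB Require Import structures.
From mathcomp Require Import all_boot all_order all_algebra.
From mathcomp Require Import zify ring lra.
Import Order.TTheory GRing.Theory Num.Theory.
Set Implicit Arguments. Unset Strict Implicit. Unset Printing Implicit Defensive.
Local Open Scope ring_scope.

Section ChainLemmas.
Variable C : finType.
Local Notation chain := {ffun {set C} -> ('F_2)^o}.
Local Notation delta := (@delta C).

Lemma F2_add_self (x : ('F_2)^o) : x + x = 0.
Proof. by case: x => [[|[|n]]] // ?; apply/val_inj. Qed.
Lemma F2_neq0 (x : ('F_2)^o) : x != 0 -> x = 1.
Proof. by case: x => [[|[|n]]] //= ? ?; apply/val_inj. Qed.
Lemma F2_10 : (1 : ('F_2)^o) != 0.
Proof. by []. Qed.

Lemma F2_scale (k x : ('F_2)^o) : k *: x = k * x.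
Proof. by []. Qed.

Lemma chain_add_self (c : chain) : c + c = 0.
Proof. by apply/ffunP => s; rewrite !ffunE F2_add_self. Qed.

Definition bdf (c : chain) : chain := \sum_(s : {set C}) c s *: bd_simplex s.
Lemma bdf_lin : linear bdf.
Proof.
move=> a u v; rewrite /bdf scaler_sumr -big_split /=; apply: eq_bigr => s _.
by rewrite !ffunE scalerDl scalerA.
Qed.
HB.instance Definition _ := GRing.isLinear.Build _ chain chain _ bdf bdf_lin.
Lemma bdE (c : chain) : bd C c = \sum_(s : {set C}) c s *: bd_simplex s.
Proof. exact: (lfunE bdf). Qed.

Lemma bdD (u v : chain) : bd C (u + v) = bd C u + bd C v.
Proof. exact: linearD. Qed.

Definition ev (s : {set C}) (c : chain) : ('F_2)^o := c s.
Lemma ev_lin s : linear (ev s).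
Proof. by move=> a u v; rewrite /ev !ffunE. Qed.
HB.instance Definition _ s := GRing.isLinear.Build _ chain ('F_2)^o _ (ev s) (ev_lin s).

Lemma deltaE s t : delta s t = if t == s then 1 else 0.
Proof. by rewrite ffunE. Qed.

Lemma delta_inj : injective delta.
Proof.
move=> s t h; have := congr1 (fun c : chain => c s) h.
by rewrite !deltaE eqxx; case: eqP => // _ /eqP; rewrite eq_sym oner_eq0.
Qed.

Lemma chain_decomp (c : chain) : c = \sum_(s : {set C}) c s *: delta s.
Proof.
apply/ffunP => t; rewrite sum_ffunE (bigD1 t) //= big1 => [|s /negbTE ts].
  by rewrite !ffunE eqxx addr0 F2_scale mulr1.
by rewrite !ffunE eq_sym ts F2_scale mulr0.
Qed.

Definition supp_sp (S : {set {set C}}) : {vspace chain} :=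
  <<[seq delta s | s <- enum S]>>%VS.

Lemma mem_supp (c : chain) (S : {set {set C}}) : reflect (forall s, c s != 0 -> s \in S) (c \in supp_sp S).
Proof.
apply: (iffP idP) => [hc s nz|h].
  apply/idPn => sS; move: nz; apply/negP; rewrite negbK.
  have sub : (supp_sp S <= lker (linfun (ev s)))%VS.
    apply/span_subvP => v /mapP [t]; rewrite mem_enum => tS ->.
    rewrite memv_ker lfunE; change (delta t s == 0); rewrite deltaE; case: (s =P t) => [st|_ //]; by rewrite st tS in sS.
  by have := subvP sub _ hc; rewrite memv_ker lfunE.
rewrite (chain_decomp c); apply: memv_suml => s _.
case: (c s =P 0) => [->|/eqP nz]; first by rewrite scale0r mem0v.
by apply: memvZ; apply: memv_span; apply: map_f; rewrite mem_enum h.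
Qed.

Lemma delta_supp s (S : {set {set C}}) : s \in S -> delta s \in supp_sp S.
Proof. by move=> sS; apply: memv_span; apply: map_f; rewrite mem_enum. Qed.

Lemma supp_subS (S Sp : {set {set C}}) : S \subset Sp -> (supp_sp S <= supp_sp Sp)%VS.
Proof.
move=> sub; apply/subvP => c /mem_supp h; apply/mem_supp => s /h.
exact: (subsetP sub).
Qed.

Lemma free_supp (S : {set {set C}}) : free [seq delta s | s <- enum S].
Proof.
apply/freeP => k hk i.
have hj : forall j : 'I_#|S|, [seq delta s | s <- enum S]`_j = delta (nth set0 (enum S) j).
  by move=> j; rewrite (nth_map set0) // -cardE.
have := congr1 (fun c : chain => c (nth set0 (enum S) i)) hk.
rewrite sum_ffunE ffunE (bigD1 i) //= big1 => [|j nji].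
  by rewrite ffunE hj deltaE eqxx F2_scale mulr1 addr0.
rewrite ffunE hj deltaE nth_uniq ?enum_uniq -?cardE //.
by rewrite (inj_eq val_inj) eq_sym (negbTE nji) F2_scale mulr0.
Qed.

Lemma dim_supp (S : {set {set C}}) : \dim (supp_sp S) = #|S|.
Proof. by have := free_supp S; rewrite /free size_map cardE => /eqP. Qed.

Lemma chains_supp (X : {set {set C}}) k :
  chains X k = supp_sp [set s in X | #|s| == k.+1].
Proof.
apply: eq_span => v; apply/mapP/mapP => [] [s hs ->]; exists s => //.
  by move: hs; rewrite mem_filter mem_enum mem_enum inE andbC.
by move: hs; rewrite mem_enum inE mem_filter mem_enum andbC.
Qed.

Lemma bd_delta s : bd C (delta s) = bd_simplex s.
Proof.
rewrite bdE (bigD1 s) //= big1 => [|t /negbTE ts]; last by rewrite deltaE ts scale0r.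
by rewrite deltaE eqxx scale1r addr0.
Qed.

Lemma bd_edge x y : x != y -> bd_simplex [set x; y] = delta [set y] + delta [set x].
Proof.
move=> nxy; rewrite /bd_simplex cards2 nxy /=.
rewrite big_setU1 /= ?inE 1?eq_sym //.
rewrite (big_pred1 y) => [|z]; last by rewrite !inE.
have -> : [set x; y] :\ x = [set y].
  apply/setP => z; rewrite !inE; case: (z =P x) => [->|_] /=; first by rewrite (negbTE nxy).
  by [].
have -> : [set x; y] :\ y = [set x].
  apply/setP => z; rewrite !inE; case: (z =P y) => [->|_] /=; first by rewrite eq_sym (negbTE nxy).
  by rewrite orbF.


  by [].
all: by rewrite ?inE eq_sym.
Qed.

Definition W (S : {set {set C}}) : {vspace chain} := (bd C @: supp_sp S)%VS.

Lemma bd_in_W s (S : {set {set C}}) : s \in S -> bd C (delta s) \in W S.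
Proof. by move=> sS; apply: memv_img; apply: delta_supp. Qed.

Lemma W_sub (S : {set {set C}}) (U : {vspace chain}) :
  (forall s, s \in S -> bd C (delta s) \in U) -> (W S <= U)%VS.
Proof.
move=> h; rewrite /W /supp_sp limg_span; apply/span_subvP => v /mapP [w /mapP [s]].
by rewrite mem_enum => sS -> ->; apply: h.
Qed.

Lemma WS (S Sp : {set {set C}}) : S \subset Sp -> (W S <= W Sp)%VS.
Proof. by move=> sub; apply: limgS; apply: supp_subS. Qed.

End ChainLemmas.

Section Graph.
Variable C : finType.
Local Notation chain := {ffun {set C} -> ('F_2)^o}.
Local Notation delta := (@delta C).
Local Notation W := (@W C).
Local Notation supp_sp := (@supp_sp C).

Lemma adj_edge (S : {set {set C}}) x y : adj S x y -> x != y ->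
  bd C (delta [set x; y]) \in W S.
Proof. by move=> h _; apply: bd_in_W. Qed.

Lemma conn_bd (S : {set {set C}}) x y : connect (adj S) x y ->
  delta [set x] + delta [set y] \in W S.
Proof.
case/connectP => p; elim: p x => [|z p IH] x /=.
  by move=> _ ->; have -> := chain_add_self (delta [set x]); apply: mem0v.
case/andP => hxz hp hy; have := IH z hp hy.
have -> : delta [set x] + delta [set y] =
  (delta [set x] + delta [set z]) + (delta [set z] + delta [set y]).
  by rewrite addrA -(addrA (delta [set x])) chain_add_self addr0.
move=> h2; apply: memvD => //.
case: (x =P z) => [->|/eqP nxz]; first by rewrite chain_add_self mem0v.
by have := bd_in_W hxz; rewrite bd_delta bd_edge // addrC.
Qed.

Definition phi (A : {set C}) (c : chain) : ('F_2)^o := \sum_(z in A) c [set z].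

Lemma phiD A (c1 c2 : chain) : phi A (c1 + c2) = phi A c1 + phi A c2.
Proof. by rewrite /phi -big_split; apply: eq_bigr => z _; rewrite ffunE. Qed.

Lemma phi_delta1 A v : phi A (delta [set v]) = if v \in A then 1 else 0.
Proof.
rewrite /phi; case: ifP => vA.
  rewrite (bigD1 v) //= deltaE eqxx big1 ?addr0 // => z /andP [_ nzv].
  rewrite deltaE; case: eqP => // /set1_inj zv; by rewrite zv eqxx in nzv.
apply: big1 => z zA; rewrite deltaE; case: eqP => // /set1_inj zv.
by rewrite -zv zA in vA.
Qed.

Lemma phi_bd A (c : chain) :
  phi A (bd C c) = \sum_(s : {set C}) c s * phi A (bd_simplex s).
Proof.
rewrite bdE /phi; under eq_bigr do rewrite sum_ffunE.
rewrite exchange_big /=; apply: eq_bigr => s _; rewrite mulr_sumr.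
by apply: eq_bigr => z _; rewrite ffunE F2_scale.
Qed.

Definition edgeset (S : {set {set C}}) := forall s, s \in S -> #|s| == 2.

Lemma parity (S : {set {set C}}) : edgeset S ->
  (forall x y, delta [set x] + delta [set y] \in W S) -> connected S.
Proof.
move=> hE hW; apply/forallP => x; apply/forallP => y; apply/idPn => nxy.
set A := [set z | connect (adj S) x z].
have hAe : forall c, c \in supp_sp S -> phi A (bd C c) = 0.
  move=> c /mem_supp hc; rewrite phi_bd; apply: big1 => s _.
  case: (c s =P 0) => [->|/eqP nz]; first by rewrite mul0r.
  have sS := hc s nz; case/cards2P: (hE s sS) => u [w [nuw esw]].
  rewrite esw bd_edge // phiD !phi_delta1.
  have uw : (u \in A) = (w \in A).
    rewrite !inE; apply/idP/idP => h; apply: connect_trans h _; apply: connect1.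
      by rewrite /adj -esw.
    by rewrite /adj setUC -esw.
  by rewrite uw F2_add_self mulr0.
have := hW x y; case/memv_imgP => c hc hcE.
have := congr1 (phi A) hcE; rewrite hAe // phiD !phi_delta1 !inE connect0.
by rewrite (negbTE nxy) addr0 => /eqP; rewrite oner_eq0.
Qed.

Lemma connected_W (S : {set {set C}}) x y : connected S ->
  delta [set x] + delta [set y] \in W S.
Proof. by move=> /forallP /(_ x) /forallP /(_ y); apply: conn_bd. Qed.

Lemma nz_chain (c : chain) : c != 0 -> exists f, c f != 0.
Proof.
move=> nz; case: (pickP (fun f => c f != 0)) => [f hf|h0]; first by exists f.
by case/eqP: nz; apply/ffunP => f; have := h0 f; rewrite ffunE => /negbFE/eqP.
Qed.

Lemma tree_indep (T : {set {set C}}) : is_spanning_tree T ->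
  forall c, c \in supp_sp T -> bd C c = 0 -> c = 0.
Proof.
case/andP => /andP [hE hconn] hmin c hc hbd; apply/eqP; apply/negP => /negP nz.
case: (nz_chain nz) => f hf.
have fT : f \in T by exact: (mem_supp _ _ hc).
have cf1 := F2_neq0 hf.
have edT : edgeset T by move=> s sT; move/forallP: hE => /(_ s); rewrite sT.
move/forallP: hmin => /(_ f); rewrite fT /= => /negP; apply.
apply: parity.
  by move=> s; rewrite inE => /andP [_ /edT].
move=> x y; have := connected_W x y hconn; apply: subvP.
apply: W_sub => s sT; case: (s =P f) => [->|/eqP nsf]; last first.
  by apply: bd_in_W; rewrite !inE nsf.
have -> : bd C (delta f) = bd C (delta f + c) by rewrite bdD hbd addr0.
apply: memv_img; apply/mem_supp => t; rewrite ffunE deltaE.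
case: (t =P f) => [->|/eqP ntf]; first by rewrite cf1 F2_add_self eqxx.
rewrite add0r => /(mem_supp _ _ hc) tT; by rewrite !inE ntf.
Qed.

End Graph.

Section Cut.
Variables (R : realFieldType) (C : finType).
Local Notation chain := {ffun {set C} -> ('F_2)^o}.
Local Notation delta := (@delta C).
Local Notation W := (@W C).
Local Notation supp_sp := (@supp_sp C).

Lemma F2_cases (x : ('F_2)^o) : x = 0 \/ x = 1.
Proof. by case: (x =P 0) => [->|/eqP /F2_neq0 ->]; [left|right]. Qed.

Lemma supp0 (c : chain) (S : {set {set C}}) s : c \in supp_sp S -> s \notin S -> c s = 0.
Proof.
move=> /mem_supp h sS; apply/eqP; apply/idPn => nz; by rewrite (h s nz) in sS.
Qed.

Lemma cut_prop (K : {set {set C}}) (ent : {set C} -> R) T (hT : is_MST K ent T)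
  (t : R) e : e \in edges K -> ent e < t ->
  bd C (delta e) \in W [set g in T | ent g < t].
Proof.
case: hT => hTK [hTst hmin].
have hTst' := hTst; case/andP: hTst => /andP [hE hconn] hTmin.
have edT : edgeset T by move=> s sT; move/forallP: hE => /(_ s); rewrite sT.
have indT := tree_indep hTst'.
rewrite inE => /andP [eK ee] het.
case eT: (e \in T); first by apply: bd_in_W; rewrite inE eT het.
apply/idPn => nW.
case/cards2P: (ee) => x [y [nxy exy]].
case/memv_imgP: (connected_W x y hconn) => p hp hpE.
have hpe : bd C p = bd C (delta e) by rewrite -hpE exy bd_delta bd_edge // addrC.
have [f /andP [pf tf]] : exists f, (p f != 0) && (t <= ent f).
  case: (pickP (fun f => (p f != 0) && (t <= ent f))) => [f hf|h0]; first by exists f.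
  case/negP: nW; rewrite -hpe; apply: memv_img; apply/mem_supp => s ps.
  have := h0 s; rewrite /= ps /= => /negbT; rewrite -ltNge => lst.
  by rewrite inE (mem_supp _ _ hp s ps) lst.
have fT : f \in T by exact: (mem_supp _ _ hp f pf).
have pf1 := F2_neq0 pf.
have nef : f != e by apply/eqP => fe; rewrite -fe fT in eT.
set T' := e |: (T :\ f).
have eT' : e \in T' by rewrite setU11.
have T'E : forall s, s \in T' -> s != e -> s \in T :\ f.
  by move=> s; rewrite !inE => /orP [->|//].
have edT' : edgeset T'.
  by move=> s; rewrite !inE => /orP [/eqP ->|/andP [_ /edT]].
have indT' : forall z, z \in supp_sp T' -> bd C z = 0 -> z = 0.
  move=> z hz hbz; case: (F2_cases (z e)) => ze.
    apply: indT hbz; apply/mem_supp => s zs.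
    have sT' := mem_supp _ _ hz s zs.
    have nse : s != e by apply/eqP => se; rewrite se ze eqxx in zs.
    by have := T'E s sT' nse; rewrite !inE => /andP [].
  pose z' := z + delta e.
  have hz' : z' \in supp_sp (T :\ f).
    apply/mem_supp => s; rewrite /z' ffunE deltaE.
    case: (s =P e) => [->|/eqP nse]; first by rewrite ze F2_add_self eqxx.
    rewrite addr0 => zs; exact: T'E s (mem_supp _ _ hz s zs) nse.
  have hbz' : bd C z' = bd C (delta e) by rewrite /z' bdD hbz add0r.
  have hq : p + z' \in supp_sp T.
    apply: memvD => //; apply: (subvP (supp_subS _)) hz'; exact: subsetDl.
  have := indT _ hq; rewrite bdD hpe hbz' chain_add_self => /(_ erefl) /ffunP /(_ f).
  rewrite !ffunE pf1 (negbTE nef) (supp0 hz) ?addr0; last by rewrite !inE eqxx (negbTE nef).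
  by move=> /eqP; rewrite oner_eq0.
have hconn' : connected T'.
  apply: parity => // u w; have := connected_W u w hconn; apply: subvP.
  apply: W_sub => s sT; case: (s =P f) => [->|/eqP nsf]; last first.
    by apply: bd_in_W; rewrite !inE sT nsf orbT.
  pose c := p + delta f + delta e.
  have -> : bd C (delta f) = bd C c.
    rewrite /c !bdD hpe addrC addrA chain_add_self add0r //.
  apply: memv_img; apply/mem_supp => s0; rewrite /c !ffunE.
  case: (s0 =P e) => [-> _|/eqP nse]; first exact: eT'.
  case: (s0 =P f) => [->|/eqP nsf0]; first by rewrite pf1 F2_add_self addr0 eqxx.
  rewrite !addr0 => ps0; by rewrite !inE nsf0 (mem_supp _ _ hp s0 ps0) orbT.
have hmin' : [forall g in T', ~~ connected (T' :\ g)].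
  apply/forallP => g; apply/implyP => gT'; apply/negP => hcg.
  case/cards2P: (edT' g gT') => u [w [nuw egw]].
  case/memv_imgP: (connected_W u w hcg) => c hc hcE.
  pose z := c + delta g.
  have hz : z \in supp_sp T'.
    apply: memvD; last exact: delta_supp.
    by apply: (subvP (supp_subS _)) hc; exact: subsetDl.
  have := indT' z hz; rewrite /z bdD -hcE egw bd_delta bd_edge // (addrC (delta [set w])).
  rewrite chain_add_self => /(_ erefl) /ffunP /(_ g).
  rewrite !ffunE (supp0 hc) ?inE ?eqxx // -egw eqxx add0r => /eqP.
  by rewrite oner_eq0.
have hT'st : is_spanning_tree T'.
  rewrite /is_spanning_tree hconn' hmin' andbT andbT.
  by apply/forallP => g; apply/implyP => /edT'.
have hT'K : T' \subset edges K.
  apply/subsetP => s; rewrite !inE => /orP [/eqP ->|/andP [_ sT]].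
    by rewrite eK ee.
  by have := subsetP hTK s sT; rewrite inE.
have := hmin T' hT'K hT'st.
rewrite /total_len (big_setD1 f fT) big_setU1 /=; last by rewrite !inE eT andbF.
rewrite /elen => hle.
have : ent e < ent f by apply: lt_le_trans tf.
move=> hlt; move: hle; rewrite lerD2r => hle.
have : 2%:R * ent e < 2%:R * ent f by rewrite ltr_pM2l.
by rewrite ltNge hle.
Qed.

End Cut.

Section RkFacts.
Variable C : finType.
Local Notation chain := {ffun {set C} -> ('F_2)^o}.
Local Notation W := (@W C).
Local Notation supp_sp := (@supp_sp C).

Lemma dims (S : {set {set C}}) :
  #|S| = (\dim (supp_sp S :&: lker (bd C)) + \dim (W S))%N.
Proof. by rewrite /W limg_ker_dim dim_supp. Qed.

Lemma chainsS (X Y : {set {set C}}) k : X \subset Y -> (chains X k <= chains Y k)%VS.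
Proof.
move=> sub; rewrite !chains_supp; apply: supp_subS; apply/subsetP => s.
by rewrite !inE => /andP [/(subsetP sub) -> ->].
Qed.

Lemma Z1S (X Y : {set {set C}}) : X \subset Y -> (Z1 X <= Z1 Y)%VS.
Proof. by move=> sub; apply: capvS => //; apply: chainsS. Qed.

Lemma B1S (X Y : {set {set C}}) : X \subset Y -> (B1 X <= B1 Y)%VS.
Proof. by move=> sub; apply: limgS; apply: chainsS. Qed.

Lemma dim_add_le (U V : {vspace chain}) : (\dim (U + V) <= \dim U + \dim V)%N.
Proof. by rewrite -dimv_sum_cap leq_addr. Qed.

Lemma rk_mono (X X' Y : {set {set C}}) : X \subset X' -> (rk X Y <= rk X' Y)%N.
Proof.
move=> sub; rewrite /rk leq_sub2r //; apply: dimvS; apply: addvS => //.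
exact: Z1S.
Qed.

Lemma rk_anti (Xl Xb Y Y' : {set {set C}}) : Xl \subset Xb -> Y \subset Y' ->
  (rk Xb Y' - rk Xl Y' <= rk Xb Y - rk Xl Y)%N.
Proof.
move=> sX sY; rewrite /rk.
set U := Z1 Xb; set U' := Z1 Xl; set B := B1 Y; set B' := B1 Y'.
have sU : (U' <= U)%VS by apply: Z1S.
have sB : (B <= B')%VS by apply: B1S.
have e1 : (U + B = U + (U' + B))%VS by rewrite addvA (addv_idPl sU).
have e2 : (U + B' = U + (U' + B'))%VS by rewrite addvA (addv_idPl sU).
have h1 := dimv_sum_cap U (U' + B); have h2 := dimv_sum_cap U (U' + B').
rewrite -e1 in h1; rewrite -e2 in h2.
have h3 : (\dim (U :&: (U' + B)) <= \dim (U :&: (U' + B')))%N.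
  by apply: dimvS; apply: capvS => //; apply: addvS.
have h4 : (\dim B <= \dim (U' + B))%N by apply: dimvS; apply: addvSr.
have h5 : (\dim B' <= \dim (U' + B'))%N by apply: dimvS; apply: addvSr.
have h6 : (\dim (U' + B) <= \dim (U + B))%N by apply: dimvS; apply: addvS.
have h7 : (\dim (U' + B') <= \dim (U + B'))%N by apply: dimvS; apply: addvS.
lia.
Qed.

Lemma graph_set1 (E : {set {set C}}) k : (forall e, e \in E -> #|e| == 2) ->
  [set s in graph_cpx E | #|s| == k.+2] = if k == 0%N then E else set0.
Proof.
move=> hE; apply/setP => s; rewrite !inE.
case: (boolP (s \in E)) => sE.
  rewrite orbT /= (eqP (hE s sE)); case: k => [|k] //=; by rewrite ?inE ?sE.
rewrite orbF; case: (boolP (s \in [set [set x] | x : C])) => /= [hs|_].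
  have [x _ sx] := imsetP hs.
  by rewrite sx cards1 -sx; case: k => [|k] /=; rewrite ?inE ?(negbTE sE).
by case: k => [|k] /=; rewrite ?inE ?(negbTE sE).
Qed.

End RkFacts.

Section Seqs.
Variable R : realFieldType.

Lemma count_enum_set (T : finType) (A : {set T}) (P : pred T) :
  count P (enum A) = #|[set x in A | P x]|.
Proof. by rewrite -sum1_count big_enum_cond /= sum1_card cardsE. Qed.

Lemma ex_min (s : seq R) (P : pred R) : has P s ->
  exists c, [/\ c \in s, P c & forall c', c' \in s -> P c' -> c <= c'].
Proof.
elim: s => [|x s IH] //= /orP [Px|hs].
  case: (boolP (has P s)) => [/IH [c [cs Pc hc]]|hn].
    case: (leP x c) => [xc|cx].
      exists x; split; rewrite ?inE ?eqxx // => c'; rewrite inE => /orP [/eqP ->//|/hc h /h].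
      exact: le_trans.
    exists c; split; rewrite ?inE ?cs ?orbT // => c'; rewrite inE => /orP [/eqP ->|/hc //].
    by move=> _; exact: ltW.
  exists x; split; rewrite ?inE ?eqxx // => c'; rewrite inE => /orP [/eqP ->//|c's Pc'].
  by case/hasP: hn; exists c'.
case/IH: hs => c [cs Pc hc].
case: (boolP (P x)) => Px.
  case: (leP x c) => [xc|cx].
    exists x; split; rewrite ?inE ?eqxx // => c'; rewrite inE => /orP [/eqP ->//|/hc h /h].
    exact: le_trans.
  exists c; split; rewrite ?inE ?cs ?orbT // => c'; rewrite inE => /orP [/eqP ->|/hc //].
  by move=> _; exact: ltW.
exists c; split; rewrite ?inE ?cs ?orbT // => c'; rewrite inE => /orP [/eqP ->|/hc //].
by rewrite (negbTE Px).
Qed.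

Lemma ex_max (s : seq R) : s != [::] ->
  exists c, c \in s /\ forall c', c' \in s -> c' <= c.
Proof.
elim: s => [|x s IH] // _; case: (altP (s =P [::])) => [->|/IH [c [cs hc]]].
  by exists x; split; rewrite ?inE ?eqxx // => c'; rewrite inE => /eqP ->.
case: (leP x c) => [xc|cx].
  exists c; split; rewrite ?inE ?cs ?orbT // => c'; rewrite inE => /orP [/eqP ->//|/hc //].
exists x; split; rewrite ?inE ?eqxx // => c'; rewrite inE => /orP [/eqP ->//|/hc h].
exact: le_trans (ltW cx).
Qed.

Lemma dominate (X Y : seq R) : all (fun x => 0 <= x) X ->
  (forall t, t \in Y -> (count (fun y => (t <= y)%R) Y <= count (fun x => (t <= x)%R) X)%N) ->
  \sum_(y <- Y) y <= \sum_(x <- X) x.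
Proof.
move: {2}(size Y) (erefl (size Y)) => n; elim: n X Y => [|n IH] X Y hs hX hc.
  move/size0nil: hs => ->; rewrite big_nil big_seq; apply: sumr_ge0 => x xX.
  exact: (allP hX).
have /ex_max [y0 [y0Y hy0]] : Y != [::] by apply/eqP => Y0; rewrite Y0 in hs.
have := hc y0 y0Y.
have pY := perm_to_rem y0Y; have /permP cY := pY.
rewrite cY /= lexx add1n => /(leq_trans (ltn0Sn _)); rewrite -has_count.
case/hasP => x0 x0X y0x0.
have pX := perm_to_rem x0X; have /permP cX := pX.
rewrite (perm_big _ pY) (perm_big _ pX) !big_cons; apply: lerD => //.
apply: IH.
- by rewrite size_rem // hs.
- by apply/allP => x /mem_rem xX; exact: (allP hX).
move=> t tY'; have tY := mem_rem tY'.
have := hc t tY; rewrite cY cX /= (hy0 _ tY) (le_trans (hy0 _ tY) y0x0) !add1n.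
by [].
Qed.

Lemma count_split (s : seq R) (P : pred R) c0 : uniq s -> c0 \in s -> P c0 ->
  count P s = (count (fun c => P c && (c != c0)) s).+1.
Proof.
move=> us c0s Pc0; have /permP h := perm_to_rem c0s.
rewrite !h /= Pc0 eqxx andbF add0n add1n rem_filter // !count_filter.
by congr (_.+1); apply: eq_count => c /=; rewrite -andbA andbb.
Qed.

Lemma sum_split (s : seq R) (P : pred R) c0 (G : R -> nat) : uniq s -> c0 \in s -> P c0 ->
  (\sum_(c <- s | P c) G c = G c0 + \sum_(c <- s | P c && (c != c0)) G c)%N.
Proof.
move=> us c0s Pc0.
rewrite -big_filter (bigD1_seq c0) ?filter_uniq ?mem_filter ?Pc0 //= big_filter_cond.
by [].
Qed.

End Seqs.

Section Main.
Variables (R : realFieldType) (C : finType) (K : {set {set C}}) (ent : {set C} -> R).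
Hypothesis hK : is_filtration K ent.
Variable a : R.
Hypothesis ha : 0 <= a.
Variable E : {set {set C}}.
Hypothesis hspan : spans E (Qle K ent a).
Hypothesis hiso : H1_incl_iso (graph_cpx E) (Qle K ent a).
Variable T : {set {set C}}.
Hypothesis hT : is_MST K ent T.

Local Notation Qa := (Qle K ent a).
Local Notation MST := (MST_at ent T a).
Local Notation chain := {ffun {set C} -> ('F_2)^o}.
Local Notation W := (@W C).
Local Notation supp_sp := (@supp_sp C).
Local Notation delta := (@delta C).

Lemma hE2 e : e \in E -> [/\ #|e| == 2, e \in K & ent e <= a].
Proof.
case/andP: hspan => /subsetP sub _ /sub; rewrite !inE => /andP [/andP [eK ea] ee].
by split.
Qed.

Lemma MST_prop e : e \in MST -> [/\ e \in T, e \in K, #|e| == 2 & ent e <= a].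
Proof.
rewrite inE /elen => /andP [eT hl]; case: hT => /subsetP sub _.
have := sub e eT; rewrite inE => /andP [eK ee]; split => //.
by rewrite -(ler_pM2l (_ : 0 < 2%:R)) // ltr0n.
Qed.

Lemma gE1 : chains (graph_cpx E) 1 = supp_sp E.
Proof. by rewrite chains_supp (graph_set1 0) //; move=> e /hE2 []. Qed.

Lemma gB1 : B1 (graph_cpx E) = 0%VS.
Proof.
rewrite /B1 chains_supp (graph_set1 1); last by move=> e /hE2 [].
by rewrite /= /supp_sp enum_set0 /= span_nil limg0.
Qed.

Lemma indT c : c \in supp_sp T -> bd C c = 0 -> c = 0.
Proof. by case: hT => _ [hst _]; apply: tree_indep. Qed.

Lemma MST_subT : MST \subset T.
Proof. by apply/subsetP => e /MST_prop []. Qed.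

Lemma dimW_le (S : {set {set C}}) : (\dim (W S) <= #|S|)%N.
Proof. by rewrite (dims S) leq_addl. Qed.

Lemma count1 : (#|MST| + rk Qa Qa <= #|E|)%N.
Proof.
rewrite (dims E) (dims MST).
have -> : (supp_sp MST :&: lker (bd C))%VS = 0%VS.
  apply/eqP; rewrite -subv0; apply/subvP => c /memv_capP [hc]; rewrite memv_ker => /eqP hb.
  rewrite memv0; apply/eqP; apply: indT hb.
  by apply: (subvP (supp_subS MST_subT)) hc.
rewrite dimv0 add0n addnC; apply: leq_add; last first.
  apply: dimvS; apply: W_sub => s /MST_prop [_ sK s2 sa].
  case/cards2P: s2 => x [y [nxy sxy]].
  have cQ : connect (adj Qa) x y by apply: connect1; rewrite /adj -sxy !inE sK sa.
  case/andP: hspan => _ /forallP /(_ x) /forallP /(_ y) /implyP /(_ cQ) cE.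
  by have := conn_bd cE; rewrite sxy bd_delta bd_edge // addrC.
case/andP: hiso => _ hsurj.
rewrite /rk.
set Z := (supp_sp E :&: lker (bd C))%VS.
have h1 : (\dim (Z1 Qa + B1 Qa) <= \dim (Z + B1 Qa))%N.
  apply: dimvS; rewrite subv_add addvSr andbT.
  by move: hsurj; rewrite /Z1 gE1.
have := dim_add_le Z (B1 Qa); lia.
Qed.

Lemma count2 t : t <= a ->
  (#|[set e in E | (ent e < t)%R]| <= #|[set e in MST | (ent e < t)%R]| + rk (Qlt K ent t) Qa)%N.
Proof.
move=> hta; set Et := [set e in E | ent e < t].
have EtE : Et \subset E by apply/subsetP => e; rewrite inE => /andP [].
rewrite (dims Et) addnC; apply: leq_add.
  have -> : [set e in MST | ent e < t] = [set e in T | ent e < t].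
    apply/setP => e; rewrite !inE /elen; case: (boolP (e \in T)) => //= eT.
    case: (boolP (ent e < t)); rewrite ?andbF // andbT => et.
    rewrite ler_pM2l ?ltr0n //; exact: (ltW (lt_le_trans et hta)).
  apply: leq_trans (dimW_le _); apply: dimvS; apply: W_sub => e.
  rewrite inE => /andP [/hE2 [e2 eK _] et].
  have eE : e \in edges K by rewrite !inE eK.
  exact: (cut_prop hT eE et).
case/andP: hiso => hinj _.
set Z := (supp_sp Et :&: lker (bd C))%VS.
have hZ1 : (Z <= Z1 (Qlt K ent t))%VS.
  apply: capvS => //; rewrite chains_supp; apply: supp_subS; apply/subsetP => e.
  by rewrite !inE => /andP [/hE2 [-> -> _] ->].
have hZ0 : (Z :&: B1 Qa)%VS = 0%VS.
  apply/eqP; rewrite -subv0; apply: subv_trans _ (_ : B1 (graph_cpx E) <= 0)%VS; last first.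
    by rewrite gB1.
  apply: subv_trans hinj; apply: capvS => //; rewrite /Z1 gE1; apply: capvS => //.
  exact: supp_subS.
have h1 := dimv_sum_cap Z (B1 Qa); rewrite hZ0 dimv0 addn0 in h1.
have h2 : (\dim (Z + B1 Qa) <= \dim (Z1 (Qlt K ent t) + B1 Qa))%N.
  by apply: dimvS; apply: addvS.
rewrite /rk; lia.
Qed.


Local Notation crit := (crit K ent).
Local Notation Qle := (Qle K ent).
Local Notation Qlt := (Qlt K ent).

Lemma ent_crit s : s \in K -> ent s \in crit.
Proof. by move=> sK; rewrite mem_undup; apply: map_f; rewrite mem_enum. Qed.

Lemma crit_uniq : uniq crit.
Proof. exact: undup_uniq. Qed.

Lemma Qle_eq x y : x <= y -> (forall c, c \in crit -> x < c -> c <= y -> False) ->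
  Qle x = Qle y.
Proof.
move=> xy h; apply/setP => s; rewrite !inE; case: (boolP (s \in K)) => //= sK.
apply/idP/idP => [sx|sy]; first exact: le_trans sx xy.
by rewrite leNgt; apply/negP => xs; exact: h (ent_crit sK) xs sy.
Qed.

Lemma Qle_Qlt x y : x < y -> (forall c, c \in crit -> x < c -> c < y -> False) ->
  Qle x = Qlt y.
Proof.
move=> xy h; apply/setP => s; rewrite !inE; case: (boolP (s \in K)) => //= sK.
apply/idP/idP => [sx|sy]; first exact: le_lt_trans sx xy.
by rewrite leNgt; apply/negP => xs; exact: h (ent_crit sK) xs sy.
Qed.

Lemma Qle_K x : (forall c, c \in crit -> x < c -> False) -> Qle x = K.
Proof.
move=> h; apply/setP => s; rewrite !inE; case: (boolP (s \in K)) => //= sK.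
by rewrite leNgt; apply/negP => xs; exact: h (ent_crit sK) xs.
Qed.

Lemma Qle_sub x y : x <= y -> Qle x \subset Qle y.
Proof.
by move=> xy; apply/subsetP => s; rewrite !inE => /andP [-> /le_trans ->].
Qed.

Lemma Qlt_sub x : Qlt x \subset Qle x.
Proof. by apply/subsetP => s; rewrite !inE => /andP [-> /ltW ->]. Qed.

Lemma Qlt_sub_le x y : x <= y -> Qlt x \subset Qle y.
Proof. by move=> xy; apply: subset_trans (Qlt_sub x) (Qle_sub xy). Qed.

Lemma tele_up n : forall t, t <= a -> count (fun c => (t < c) && (c <= a)) crit = n ->
  (\sum_(c <- crit | ((t < c) && (c <= a))%R) (rk (Qle c) Qa - rk (Qlt c) Qa)
     = rk Qa Qa - rk (Qle t) Qa)%N.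
Proof.
elim: n => [|n IH] t hta hcnt.
  have hn : forall c, c \in crit -> (t < c) && (c <= a) = false.
    move=> c cin; apply/negbTE; move: c cin; apply/hasPn; by rewrite has_count hcnt.
  rewrite big_seq_cond big1 => [|c /andP [cin]]; last by rewrite hn.
  have -> : Qle t = Qa.
    apply: Qle_eq hta _ => c cin tc ca; by have := hn c cin; rewrite tc ca.
  by rewrite subnn.
have hP : has (fun c => (t < c) && (c <= a)) crit by rewrite has_count hcnt.
case: (ex_min hP) => c0 [c0in /andP [tc0 c0a] hmin].
have equiv : forall c, c \in crit ->
    ((t < c) && (c <= a)) && (c != c0) = (c0 < c) && (c <= a).
  move=> c cin; apply/idP/idP => [/andP [/andP [tc ca] nc]|/andP [c0c ca]].
    by rewrite ca andbT lt_neqAle eq_sym nc hmin ?tc ?ca.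
  by rewrite ca (lt_trans tc0 c0c) (gt_eqF c0c).
rewrite (sum_split _ crit_uniq c0in) /=; last by rewrite tc0 c0a.
move: hcnt; rewrite (count_split crit_uniq c0in) /=; last by rewrite tc0 c0a.
move=> /eqP; rewrite eqSS => /eqP hcnt'.
have e1 : (\sum_(c <- crit | (((t < c) && (c <= a)) && (c != c0))%R)
              (rk (Qle c) Qa - rk (Qlt c) Qa)
          = \sum_(c <- crit | ((c0 < c) && (c <= a))%R) (rk (Qle c) Qa - rk (Qlt c) Qa))%N.
  rewrite big_seq_cond [RHS]big_seq_cond; apply: eq_bigl => c.
  by case: (boolP (c \in crit)) => //= cin; rewrite equiv.
have e2 : count (fun c => ((t < c) && (c <= a)) && (c != c0)) crit
        = count (fun c => (c0 < c) && (c <= a)) crit.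
  by apply: eq_in_count => c cin; exact: equiv.
rewrite e1 (IH c0 c0a); last by rewrite -e2.
have -> : Qlt c0 = Qle t.
  symmetry; apply: Qle_Qlt tc0 _ => c cin tc cc0.
  have := hmin c cin; rewrite tc (le_trans (ltW cc0) c0a) => /(_ erefl).
  by rewrite leNgt cc0.
have m1 : (rk (Qle t) Qa <= rk (Qle c0) Qa)%N by apply: rk_mono; apply: Qle_sub; exact: ltW.
have m2 : (rk (Qle c0) Qa <= rk Qa Qa)%N by apply: rk_mono; apply: Qle_sub.
lia.
Qed.

Lemma tele_down (Xl Xb : {set {set C}}) (sX : Xl \subset Xb) n : forall x,
  count (fun c => x < c) crit = n ->
  (\sum_(d <- crit | (x < d)%R) ((rk Xb (Qlt d) - rk Xl (Qlt d)) - (rk Xb (Qle d) - rk Xl (Qle d)))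
    + (rk Xb K - rk Xl K) = rk Xb (Qle x) - rk Xl (Qle x))%N.
Proof.
elim: n => [|n IH] x hcnt.
  have hn : forall c, c \in crit -> (x < c) = false.
    move=> c cin; apply/negbTE; move: c cin; apply/hasPn; by rewrite has_count hcnt.
  rewrite big_seq_cond big1 => [|c /andP [cin]]; last by rewrite hn.
  rewrite add0n (Qle_K (x:=x)) // => c cin xc; by rewrite hn in xc.
have hP : has (fun c => x < c) crit by rewrite has_count hcnt.
case: (ex_min hP) => d0 [d0in xd0 hmin].
have equiv : forall c, c \in crit -> (x < c) && (c != d0) = (d0 < c).
  move=> c cin; apply/idP/idP => [/andP [xc nc]|d0c].
    by rewrite lt_neqAle eq_sym nc hmin.
  by rewrite (lt_trans xd0 d0c) (gt_eqF d0c).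
rewrite (sum_split _ crit_uniq d0in) //=.
move: hcnt; rewrite (count_split crit_uniq d0in) //=.
move=> /eqP; rewrite eqSS => /eqP hcnt'.
set G := fun d => ((rk Xb (Qlt d) - rk Xl (Qlt d)) - (rk Xb (Qle d) - rk Xl (Qle d)))%N.
have e1 : (\sum_(c <- crit | ((x < c) && (c != d0))%R) G c = \sum_(c <- crit | (d0 < c)%R) G c)%N.
  rewrite big_seq_cond [RHS]big_seq_cond; apply: eq_bigl => c.
  by case: (boolP (c \in crit)) => //= cin; rewrite equiv.
have e2 : count (fun c => (x < c) && (c != d0)) crit = count (fun c => d0 < c) crit.
  by apply: eq_in_count => c cin; exact: equiv.
have IH' := IH d0; rewrite -e2 in IH'; have {}IH' := IH' hcnt'.
rewrite e1 -addnA IH' /G.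
have -> : Qlt d0 = Qle x.
  symmetry; apply: Qle_Qlt xd0 _ => c cin xc cd0.
  have := hmin c cin xc; by rewrite leNgt cd0.
have := rk_anti sX (Qle_sub (ltW xd0)).
lia.
Qed.

Lemma pdE : pd_birth_sum K ent a =
  \sum_(b <- crit | b <= a) ((rk (Qle b) Qa - rk (Qlt b) Qa)%N%:R * b).
Proof.
rewrite /pd_birth_sum; apply: eq_bigr => b _.
rewrite -mulr_suml -mulrDl -natr_sum -natrD; congr (_%:R * _).
rewrite /pd_mult; exact: (tele_down (Qlt_sub b) erefl).
Qed.


Lemma sum_nseq n (b : R) : \sum_(i <- nseq n b) i = n%:R * b.
Proof.
elim: n => [|n IH]; first by rewrite big_nil mul0r.
by rewrite /= big_cons IH mulrSr mulrDl mul1r addrC.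
Qed.

Definition mb (b : R) : nat := (rk (Qle b) Qa - rk (Qlt b) Qa)%N.

Definition Xs := [seq ent e | e <- enum E].
Definition Ys := [seq ent e | e <- enum MST] ++
  flatten [seq nseq (mb b) b | b <- [seq b <- crit | b <= a]].

Lemma sumX : \sum_(x <- Xs) x = \sum_(e in E) ent e.
Proof. by rewrite big_map big_enum. Qed.

Lemma sumY : \sum_(y <- Ys) y =
  \sum_(e in MST) ent e + \sum_(b <- crit | b <= a) ((mb b)%:R * b).
Proof.
rewrite big_cat big_map big_enum big_flatten big_map big_filter; congr (_ + _).
by apply: eq_bigr => b _; rewrite sum_nseq.
Qed.

Lemma count_lt (S : {set {set C}}) t :
  (count (fun x => (t <= x)%R) [seq ent e | e <- enum S] + #|[set e in S | (ent e < t)%R]|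
    = #|S|)%N.
Proof.
rewrite count_map -count_enum_set cardE -(count_predC (fun e => (t <= ent e)%R)).
by congr (_ + _); apply: eq_count => e /=; rewrite ltNge.
Qed.

Lemma cY t : t \in crit -> t <= a ->
  count (fun y => (t <= y)%R) Ys =
  (count (fun x => (t <= x)%R) [seq ent e | e <- enum MST] + (rk Qa Qa - rk (Qlt t) Qa))%N.
Proof.
move=> tc ta; rewrite count_cat count_flatten sumnE !big_map big_filter; congr (_ + _)%N.
under eq_bigr do rewrite count_nseq.
have -> : (\sum_(b <- crit | (b <= a)%R) ((t <= b)%R * mb b)
         = \sum_(b <- crit | ((b <= a) && (t <= b))%R) mb b)%N.
  by rewrite [RHS]big_mkcondr /=; apply: eq_bigr => b _; case: (t <= b); rewrite ?mul1n ?mul0n.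
rewrite (sum_split _ crit_uniq tc) /=; last by rewrite ta lexx.
have e1 : (\sum_(c <- crit | (((c <= a) && (t <= c)) && (c != t))%R) mb c
         = \sum_(c <- crit | ((t < c) && (c <= a))%R) mb c)%N.
  apply: eq_bigl => c; rewrite [in RHS]lt_neqAle (eq_sym t).
  by case: (c <= a); case: (c != t); rewrite ?andbF ?andbT.
rewrite e1 /mb (@tele_up _ t ta erefl).
have m1 : (rk (Qlt t) Qa <= rk (Qle t) Qa)%N by apply: rk_mono; apply: Qlt_sub.
have m2 : (rk (Qle t) Qa <= rk Qa Qa)%N by apply: rk_mono; apply: Qle_sub.
lia.
Qed.

Lemma main_ineq : total_len ent MST + 2%:R * pd_birth_sum K ent a <= total_len ent E.
Proof.
have tl : forall S, total_len ent S = 2%:R * \sum_(e in S) ent e.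
  by move=> S; rewrite /total_len /elen -mulr_sumr.
rewrite !tl -mulrDr ler_pM2l ?ltr0n // pdE.
rewrite -sumX.
have -> : \sum_(e in MST) ent e
      + \sum_(b <- crit | b <= a) ((rk (Qle b) Qa - rk (Qlt b) Qa)%N%:R * b)
      = \sum_(y <- Ys) y by rewrite sumY.
apply: dominate.
  apply/allP => x /mapP [e]; rewrite mem_enum => eE ->.
  case/hE2: eE => _ eK _; case: hK => _ _ h _ _; exact: h.
move=> t tY.
have [tc ta] : t \in crit /\ t <= a.
  move: tY; rewrite mem_cat => /orP [/mapP [e]|/flattenP [s]].
    by rewrite mem_enum => /MST_prop [_ eK _ ea] ->; split => //; exact: ent_crit.
  case/mapP => b; rewrite mem_filter => /andP [ba bc] ->; rewrite mem_nseq => /andP [_ /eqP ->].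
  by [].
rewrite (cY tc ta).
have hX := count_lt E t; have hM := count_lt MST t.
have h1 := count1; have h2 := count2 ta.
have h3 : (#|[set e in MST | (ent e < t)%R]| <= #|MST|)%N.
  by apply: subset_leq_card; apply/subsetP => e; rewrite inE => /andP [].
have h4 : (rk (Qlt t) Qa <= rk Qa Qa)%N by apply: rk_mono; apply: Qlt_sub_le.
rewrite /Xs; lia.
Qed.

End Main.

Theorem mainTheorem8 (R : realFieldType) (C : finType)
  (K : {set {set C}}) (ent : {set C} -> R)
  (hK : is_filtration K ent) (alpha : R) (halpha : 0 <= alpha)
  (E : {set {set C}})
  (hspan : spans E (Qle K ent alpha))
  (hiso : H1_incl_iso (graph_cpx E) (Qle K ent alpha))
  (T : {set {set C}}) (hT : is_MST K ent T) :
  total_len ent (MST_at ent T alpha) + 2%:R * pd_birth_sum K ent alpha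
    <= total_len ent E.
Proof. exact: main_ineq. Qed.
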